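(* Let $k\in\mathbb N^+$ and let $G=(V,E)$ be a graph without isolated vertices. If $G$ contains an independent set of size $(k-1)^2+1$, then $G$ has a $k$-edge induced subgraph.
   Context: All graphs are simple (finite, nonempty vertex set, undirected, no loops or multiple edges). A vertex is isolated if it has degree $0$. A $k$-edge induced subgraph of $G$ is an induced subgraph $G[S]$ ($S\neq\emptyset$) with exactly $k$ edges. *)

(* Defs.v *)
From mathcomp Require Import all_boot.
Set Implicit Arguments. Unset Strict Implicit. Unset Printing Implicit Defensive.

Definition simple_graph (T : finType) (e : rel T) : Prop :=
  symmetric e /\ irreflexive e.

Definition isolated (T : finType) (e : rel T) (x : T) : bool :=
  [forall y, ~~ e x y].

Definition independent (T : finType) (e : rel T) (S : {set T}) : bool :=
  [forall x in S, forall y in S, ~~ e x y].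

Definition induced_edges (T : finType) (e : rel T) (S : {set T}) : {set {set T}} :=
  [set E : {set T} | (E \subset S) && [exists x, exists y, e x y && (E == [set x; y])]].

Definition num_induced_edges (T : finType) (e : rel T) (S : {set T}) : nat :=
  #|induced_edges e S|.

(* Main.v *)
Require Import Defs.
From mathcomp Require Import all_boot.
Set Implicit Arguments. Unset Strict Implicit. Unset Printing Implicit Defensive.

Section G.
Variables (T : finType) (e : rel T).
Hypothesis sg : simple_graph e.

Lemma ne0 : num_induced_edges e set0 = 0.
Proof.
apply/eqP; rewrite cards_eq0; apply/eqP/setP=> E; rewrite !inE.
apply/negbTE/negP=> /andP[sub /existsP[x /existsP[y /andP[_ /eqP hE]]]].
have : x \in E by rewrite hE !inE eqxx.
by move/(subsetP sub); rewrite inE.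
Qed.

Lemma add_v (x : T) (S : {set T}) : x \notin S ->
  num_induced_edges e (x |: S) = num_induced_edges e S + #|[set y in S | e x y]|.
Proof.
case: sg => sym irr xS.
rewrite /num_induced_edges.
have -> : induced_edges e (x |: S) =
   induced_edges e S :|: [set [set x; y] | y in [set y in S | e x y]].
  apply/setP=> E; rewrite /induced_edges !inE.
  apply/idP/idP.
  - case/andP=> sub /existsP[a /existsP[b /andP[eab /eqP hE]]].
    case: (boolP (x \in E)) => xE.
      apply/orP; right; apply/imsetP.
      have [ha|hb] : x = a \/ x = b by apply/set2P; rewrite -hE.
        subst a; exists b; last by [].
        rewrite inE eab andbT.
        have : b \in x |: S by apply: (subsetP sub); rewrite hE !inE eqxx orbT.
        rewrite !inE; case/orP=> // /eqP hb; subst b; by rewrite irr in eab.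
      subst b; exists a; last by rewrite hE setUC.
      rewrite inE sym eab andbT.
      have : a \in x |: S by apply: (subsetP sub); rewrite hE !inE eqxx.
      rewrite !inE; case/orP=> // /eqP hb; subst a; by rewrite irr in eab.
    apply/orP; left; apply/andP; split.
      apply/subsetP=> z zE; have := subsetP sub z zE; rewrite !inE.
      by case/orP=> // /eqP hz; subst z; rewrite zE in xE.
    by apply/existsP; exists a; apply/existsP; exists b; rewrite eab hE eqxx.
  - case/orP.
      case/andP=> sub ex; apply/andP; split=> //.
      by apply: (subset_trans sub); apply/subsetP=> z zS; rewrite !inE zS orbT.
    case/imsetP=> y; rewrite inE => /andP[yS exy] ->.
    apply/andP; split.
      by apply/subsetP=> z; rewrite !inE; case/orP=> /eqP ->; rewrite ?eqxx ?yS ?orbT.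
    by apply/existsP; exists x; apply/existsP; exists y; rewrite exy eqxx.
have dis : [disjoint induced_edges e S & [set [set x; y] | y in [set y in S | e x y]]].
  apply/pred0P=> E /=; apply/negbTE/negP=> /andP[].
  rewrite /induced_edges inE => /andP[sub _] /imsetP[y _ hE].
  have : x \in E by rewrite hE !inE eqxx.
  by move/(subsetP sub); rewrite (negbTE xS).
case: (leq_card_setU (induced_edges e S) [set [set x; y] | y in [set y in S | e x y]]) => _.
rewrite dis => /eqP ->; rewrite card_in_imset //.
move=> y1 y2; rewrite !inE => /andP[y1S _] /andP[y2S _] h.
have : y1 \in [set x; y2] by rewrite -h !inE eqxx orbT.
rewrite !inE; case/orP=> /eqP // hy; subst y1; by rewrite y1S in xS.
Qed.

Lemma indepP (I : {set T}) x y : independent e I -> x \in I -> y \in I -> ~~ e x y.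
Proof. by move=> /forall_inP h xI yI; have /forall_inP := h x xI; apply. Qed.

Definition J1 (I W : {set T}) := [set j in I | (j \notin W) && (#|[set y in W | e j y]| == 1)].

Lemma fill (I W : {set T}) : independent e I -> forall n, n <= #|J1 I W| ->
  exists J : {set T}, J \subset J1 I W /\ #|J| = n /\
     num_induced_edges e (W :|: J) = num_induced_edges e W + n.
Proof.
move=> hI; elim=> [|n IH] hn.
  by exists set0; rewrite sub0set cards0 setU0 addn0.
have [J [sJ [cJ eJ]]] := IH (ltnW hn).
have : ~~ (J1 I W \subset J).
  by apply/negP=> /subset_leq_card; rewrite cJ leqNgt hn.
case/subsetPn=> j jJ1 jJ.
have := jJ1; rewrite inE => /andP[jI /andP[jW dj]].
exists (j |: J); split; first by rewrite subUset sub1set jJ1 sJ.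
split; first by rewrite cardsU1 jJ cJ.
have -> : W :|: (j |: J) = j |: (W :|: J) by rewrite setUCA.
rewrite add_v; last by rewrite !inE negb_or jW jJ.
rewrite eJ -addnA; congr (_ + _).
have -> : [set y in W :|: J | e j y] = [set y in W | e j y].
  apply/setP=> y; rewrite !inE; case: (boolP (y \in J)) => yJ; last by rewrite orbF.
  have yI : y \in I by have := subsetP sJ y yJ; rewrite inE => /andP[].
  by rewrite (negbTE (indepP hI jI yI)) !andbF.
by rewrite (eqP dj) addn1.
Qed.

Lemma finish (I W : {set T}) (k : nat) : independent e I -> 0 < k ->
  num_induced_edges e W <= k <= num_induced_edges e W + #|J1 I W| ->
  exists S : {set T}, S != set0 /\ num_induced_edges e S = k.
Proof.
move=> hI k0 /andP[h1 h2].
have hn : k - num_induced_edges e W <= #|J1 I W| by rewrite leq_subLR.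
have [J [_ [_ eJ]]] := @fill I W hI _ hn.
exists (W :|: J); rewrite eJ subnKC //; split=> //.
apply/negP=> /eqP h; move: eJ; rewrite h ne0 subnKC // => k0'.
by rewrite -k0' in k0.
Qed.

Lemma minW (U : {set T}) (k : nat) : 0 < k ->
  k <= #|U| -> exists2 W : {set T}, W \subset U &
  num_induced_edges e W <= k <= num_induced_edges e W + #|W|.
Proof.
move=> k0 kU.
pose P := fun W : {set T} => (W \subset U) && (k <= num_induced_edges e W + #|W|).
have PU : P U by rewrite /P subxx /= (leq_trans kU) // leq_addl.
have [A /minsetP[PA minA] _] := minset_exists PU.
move: (PA); rewrite /P => /andP[AU hA].
exists A => //; rewrite hA andbT.
have [w wA] : exists w, w \in A.
  apply/set0Pn/negP=> /eqP A0; move: hA; rewrite A0 ne0 cards0.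
  by rewrite leqNgt k0.
have nPB : ~~ P (A :\ w).
  apply/negP=> PB; have := minA _ PB (subsetDl _ _).
  by move/setP/(_ w); rewrite !inE eqxx wA.
move: nPB; rewrite /P (subset_trans (subsetDl _ _) AU) /= -ltnNge => hB.
have -> : A = w |: (A :\ w) by rewrite setD1K.
rewrite add_v; last by rewrite !inE eqxx.
apply: ltnW; apply: leq_trans hB; rewrite ltnS leq_add2l.
by apply: subset_leq_card; apply/subsetP=> y; rewrite inE => /andP[].
Qed.
End G.

Theorem lemma3p9 (T : finType) (e : rel T) (k : nat) :
  0 < k ->
  simple_graph e ->
  (forall x : T, ~~ isolated e x) ->
  (exists I : {set T}, independent e I /\ #|I| = (k - 1) ^ 2 + 1) ->
  exists S : {set T}, S != set0 /\ num_induced_edges e S = k.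
Proof.
move=> k0 sg noiso [I [hI cI]].
have [sym irr] := sg.
pose P := fun U : {set T} => [forall j in I, [exists u in U, e j u]].
have PT : P setT.
  apply/forall_inP=> j _; have := noiso j; rewrite /isolated.
  case/forallPn=> y; rewrite negbK => ejy.
  by apply/exists_inP; exists y; rewrite ?inE.
have [U /minsetP[PU minU] _] := minset_exists PT.
have priv : forall u, u \in U -> exists2 j, j \in I & [set y in U | e j y] = [set u].
  move=> u uU.
  have : ~~ P (U :\ u).
    apply/negP=> PB; have := minU _ PB (subsetDl _ _).
    by move/setP/(_ u); rewrite !inE eqxx uU.
  case/forall_inPn=> j jI /exists_inPn hj.
  exists j => //.
  have [v vU ejv] := exists_inP (forall_inP PU j jI).
  have vu : v = u.
    case: (eqVneq v u) => // nvu.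
    by have := hj v; rewrite !inE nvu vU ejv => /(_ isT).
  subst v.
  apply/setP=> y; rewrite !inE; apply/idP/idP.
    case/andP=> yU ejy; case: (eqVneq y u) => // nyu.
    by have := hj y; rewrite !inE nyu yU ejy => /(_ isT).
  by move/eqP->; rewrite uU ejv.
have UI : forall u, u \in U -> u \notin I.
  move=> u uU; have [j jI hj] := priv u uU.
  have : u \in [set y in U | e j y] by rewrite hj inE.
  rewrite inE => /andP[_ eju]; apply/negP=> uI.
  by have := indepP hI uI jI; rewrite sym eju.
case: (boolP [exists u in U, k <= #|[set j in I | e j u]|]).
  case/exists_inP=> u uU ku.
  apply: (@finish T e sg I [set u] k hI k0).
  have -> : num_induced_edges e [set u] = 0.
    rewrite -(setU0 [set u]) add_v // ?inE // ne0.
    by apply/eqP; rewrite cards_eq0; apply/eqP/setP=> y; rewrite !inE.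
  rewrite /= add0n (leq_trans ku) //; apply: subset_leq_card.
  apply/subsetP=> j; rewrite !inE => /andP[jI eju].
  rewrite jI /=; apply/andP; split.
    by apply/negP=> /eqP ju; subst j; rewrite irr in eju.
  apply/cards1P; exists u; apply/setP=> y; rewrite !inE.
  by case: (eqVneq y u) => [->|]; rewrite ?eju ?andbF.
move/exists_inPn=> small.
have kU : k <= #|U|.
  have h1 : #|I| <= #|U| * (k - 1).
    have : I \subset \bigcup_(u in U) [set j in I | e j u].
      apply/subsetP=> j jI; have [u uU eju] := exists_inP (forall_inP PU j jI).
      by apply/bigcupP; exists u => //; rewrite inE jI.
    move/subset_leq_card/leq_trans; apply.
    rewrite -sum_nat_const.
    apply: (big_ind2 (fun (X : {set T}) n => #|X| <= n)).
    - by rewrite cards0.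
    - move=> X1 n1 X2 n2 h1 h2; apply: leq_trans (leq_card_setU _ _) _.
      exact: leq_add.
    - by move=> u uU; have := small u uU; rewrite -ltnNge subn1 => h; rewrite -ltnS prednK.
  rewrite leqNgt; apply/negP=> hU.
  have hU' : #|U| <= k - 1 by rewrite subn1 -ltnS prednK.
  have h2 := leq_mul hU' (leqnn (k - 1)).
  rewrite mulnn in h2.
  by have := leq_trans h1 h2; rewrite cI addn1 ltnn.
have [W WU hW] := minW sg k0 kU.
apply: (@finish T e sg I W k hI k0).
move: hW => /andP[-> hW]; apply: (leq_trans hW); rewrite leq_add2l.
pose f j := odflt j [pick y in W | e j y].
apply: leq_trans (leq_imset_card f _); apply: subset_leq_card.
apply/subsetP=> w wW; have wU := subsetP WU w wW.
have [j jI hj] := priv w wU.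
have ejw : e j w.
  have : w \in [set y in U | e j y] by rewrite hj inE.
  by rewrite inE => /andP[].
have hW' : [set y in W | e j y] = [set w].
  apply/setP=> y; rewrite !inE; apply/idP/idP.
    case/andP=> yW ejy.
    have : y \in [set y in U | e j y] by rewrite inE (subsetP WU y yW).
    by rewrite hj inE.
  by move/eqP->; rewrite wW ejw.
apply/imsetP; exists j.
  rewrite inE jI hW' cards1 eqxx andbT /=.
  by apply/negP=> /(subsetP WU) jU; have := UI j jU; rewrite jI.
rewrite /f; case: pickP => [y /andP[yW ejy]|/(_ w)]; last by rewrite wW ejw.
have : y \in [set y in W | e j y] by rewrite inE yW.
by rewrite hW' inE => /eqP.
Qed.
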